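(* Let $n\in\mathbb{Z}$ with $|n|\geq1$, $\alpha>0$, $R>0$ and $\kappa<\alpha^{-1}-\frac{r_0^2+n^2}{2R^2}$. If $$\left(\frac{6\,(1+n^2(2\ln2-1))}{\alpha^{-1}-\kappa}\right)^{1/2}<R,$$ then the Nehari manifold $\mathcal{M}$ is nonempty.
   Context: $r_0\approx2.404825$ is the first positive zero of the Bessel function $J_0$. $H$ is the completion of $\{u\in C^1[0,R]: u(0)=0=u(R)\}$ with respect to the inner product $(u,\tilde u)=\int_0^R\{ru_r\tilde u_r+\frac1r u\tilde u\}dr$. $\gamma_\kappa(u)=\frac12\int_0^R\{ru_r^2+\frac{n^2}{r}u^2-2(\alpha^{-1}-\kappa)ru^2+2\alpha^{-1}\frac{ru^2}{1+\alpha u^2}\}dr$ and $\mathcal{M}=\{u\in H\setminus\{0\}:\gamma_\kappa(u)=0\}$. *)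

(* Defs.v *)
From Stdlib Require Import Reals ZArith.
From Coquelicot Require Import Coquelicot.
Open Scope R_scope.

Definition J0 (x : R) : R :=
  Series (fun m : nat => (-1) ^ m / (INR (fact m)) ^ 2 * (x / 2) ^ (2 * m)).

Definition first_pos_zero_J0 (r0 : R) : Prop :=
  0 < r0 /\ J0 r0 = 0 /\ (forall x, 0 < x < r0 -> J0 x <> 0).

(* The generating class: u in C^1[0,R] with u(0) = 0 = u(R).
   (Every C^1 function on [0,R] extends to a C^1 function on the whole line,
   so we take u : R -> R of class C^1 on R; u_r is Derive u.) *)
Definition C1_0 (Rad : R) (u : R -> R) : Prop :=
  (forall x, ex_derive u x) /\ (forall x, continuous (Derive u) x) /\
  u 0 = 0 /\ u Rad = 0.

Definition normH2 (Rad : R) (u : R -> R) : R :=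
  RInt (fun r => r * (Derive u r) ^ 2 + / r * (u r) ^ 2) 0 Rad.

Definition gammak (n : Z) (alpha kappa Rad : R) (u : R -> R) : R :=
  / 2 * RInt (fun r => r * (Derive u r) ^ 2 + (IZR n) ^ 2 / r * (u r) ^ 2
                        - 2 * (/ alpha - kappa) * r * (u r) ^ 2
                        + 2 * / alpha * (r * (u r) ^ 2 / (1 + alpha * (u r) ^ 2))) 0 Rad.

(* An element of the completion H is (the class of) a Cauchy sequence of
   C^1_0 functions for the H-norm; it is the zero element iff the sequence
   is equivalent to 0, i.e. its norms tend to 0.  gamma_kappa extends to H by
   continuity, so its value on the class is lim gamma_kappa (u k). *)
Definition H_cauchy (Rad : R) (u : nat -> R -> R) : Prop :=
  (forall k, C1_0 Rad (u k)) /\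
  (forall eps : R, 0 < eps -> exists N : nat, forall k l : nat,
      (N <= k)%nat -> (N <= l)%nat -> normH2 Rad (fun r => u k r - u l r) < eps).

(* The Nehari set M = { u in H \ {0} : gamma_kappa(u) = 0 } is nonempty. *)
Definition Nehari_nonempty (n : Z) (alpha kappa Rad : R) : Prop :=
  exists u : nat -> R -> R,
    H_cauchy Rad u /\
    ~ is_lim_seq (fun k => normH2 Rad (u k)) 0 /\
    is_lim_seq (fun k => gammak n alpha kappa Rad (u k)) 0.

(* Main.v *)
Require Import Defs.
From Stdlib Require Import Reals Lra Lia ZArith.
From Coquelicot Require Import Coquelicot.
Open Scope R_scope.
Lemma cR_plus (f g : R -> R) x : continuous f x -> continuous g x -> continuous (fun y => f y + g y) x.
Proof. intros; apply (continuous_plus f g); auto. Qed.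
Lemma cR_minus (f g : R -> R) x : continuous f x -> continuous g x -> continuous (fun y => f y - g y) x.
Proof. intros; apply (continuous_minus f g); auto. Qed.
Lemma cR_mult (f g : R -> R) x : continuous f x -> continuous g x -> continuous (fun y => f y * g y) x.
Proof. intros; apply (continuous_mult f g); auto. Qed.
Lemma cR_pow2 (f : R -> R) x : continuous f x -> continuous (fun y => f y ^ 2) x.
Proof. intros. apply (continuous_ext (fun y => f y * (f y * 1))). intros; simpl; ring.
  apply cR_mult; auto. apply cR_mult; auto. apply continuous_const. Qed.
Lemma cR_const (c : R) x : continuous (fun _ : R => c) x.
Proof. apply continuous_const. Qed.
Lemma cR_id x : continuous (fun y : R => y) x.
Proof. apply continuous_id. Qed.
Lemma cR_inv (f : R -> R) x : continuous f x -> f x <> 0 -> continuous (fun y => / f y) x.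
Proof. intros Hf Hx. apply (continuous_comp f Rinv). auto.
  apply continuity_pt_filterlim. apply continuity_pt_inv; auto. apply continuity_pt_id. Qed.
Lemma cR_div (f g : R -> R) x : continuous f x -> continuous g x -> g x <> 0 -> continuous (fun y => f y / g y) x.
Proof. intros. apply cR_mult; auto. apply cR_inv; auto. Qed.

Lemma cR_opp (f : R -> R) x : continuous f x -> continuous (fun y => - f y) x.
Proof. intros. apply (continuous_opp f); auto. Qed.

Lemma cR_pow (f : R -> R) (m : nat) x : continuous f x -> continuous (fun y => f y ^ m) x.
Proof. intros H. induction m. apply cR_const. simpl. apply (cR_mult f (fun y => f y ^ m)); auto. Qed.

Ltac cont1 := first [ assumption
  | match goal with H : forall y, continuous ?f y |- continuous ?f _ => apply H end
  | match goal with H : forall y, continuous ?f y |- continuous (fun z => ?f z) _ => apply H end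
  | match goal with H : forall t y, continuous (?f t) y |- continuous (fun z => ?f _ z) _ => apply H end
  | match goal with H : forall t y, continuous (?f t) y |- continuous (?f _) _ => apply H end
  | match goal with
    | |- continuous (fun _ => ?c) _ => apply (cR_const c)
    | |- continuous (fun y => y) _ => apply cR_id
    | |- continuous (fun y => @?a y - @?b y) _ => apply (cR_minus a b)
    | |- continuous (fun y => @?a y + @?b y) _ => apply (cR_plus a b)
    | |- continuous (fun y => @?a y * @?b y) _ => apply (cR_mult a b)
    | |- continuous (fun y => - @?a y) _ => apply (cR_opp a)
    | |- continuous (fun y => @?a y ^ 2) _ => apply (cR_pow2 a)
    | |- continuous (fun y => @?a y ^ ?m) _ => apply (cR_pow a m)
    end ].
Ltac cont := repeat cont1.



Lemma RInt_correct_R (f : R -> R) a b : ex_RInt f a b -> is_RInt f a b (RInt f a b).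
Proof. intros; apply (RInt_correct (V:=R_CompleteNormedModule)); auto. Qed.

Lemma RInt_lin4 (f1 f2 f3 f4 : R -> R) a b c1 c2 c3 c4 :
  ex_RInt f1 a b -> ex_RInt f2 a b -> ex_RInt f3 a b -> ex_RInt f4 a b ->
  RInt (fun r => c1 * f1 r + c2 * f2 r + c3 * f3 r + c4 * f4 r) a b =
  c1 * RInt f1 a b + c2 * RInt f2 a b + c3 * RInt f3 a b + c4 * RInt f4 a b.
Proof.
  intros E1 E2 E3 E4.
  apply is_RInt_unique.
  apply (is_RInt_plus (fun r => c1 * f1 r + c2 * f2 r + c3 * f3 r) (fun r => c4 * f4 r)).
  apply (is_RInt_plus (fun r => c1 * f1 r + c2 * f2 r) (fun r => c3 * f3 r)).
  apply (is_RInt_plus (fun r => c1 * f1 r) (fun r => c2 * f2 r)).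
  all: apply (is_RInt_scal (V:=R_NormedModule)); apply RInt_correct_R; auto.
Qed.

Lemma RInt_diff_bound (f g : R -> R) a b M : a <= b -> ex_RInt f a b -> ex_RInt g a b ->
  (forall x, a <= x <= b -> Rabs (f x - g x) <= M) -> Rabs (RInt f a b - RInt g a b) <= (b - a) * M.
Proof.
  intros Hab Ef Eg Hb.
  replace (RInt f a b - RInt g a b) with (RInt (fun x => f x - g x) a b).
  apply abs_RInt_le_const; auto. apply (ex_RInt_minus f g); auto.
  apply (RInt_minus f g); auto.
Qed.

Lemma den_ne (a x : R) : 0 < a -> 1 + a * x ^ 2 <> 0.
Proof. intros. pose proof (pow2_ge_0 x). nra. Qed.

Lemma h_lip (x y a r : R) : 0 < a -> 0 <= r ->
  Rabs (r * x ^ 2 / (1 + a * x ^ 2) - r * y ^ 2 / (1 + a * y ^ 2)) <= r * Rabs (x ^ 2 - y ^ 2).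
Proof.
  intros Ha Hr. pose proof (pow2_ge_0 x). pose proof (pow2_ge_0 y).
  assert (D1: 1 <= 1 + a * x^2) by nra. assert (D2 : 1 <= 1 + a * y ^2) by nra.
  replace (r * x ^ 2 / (1 + a * x ^ 2) - r * y ^ 2 / (1 + a * y ^ 2)) with
    (r * (x^2 - y^2) * / ((1 + a * x ^ 2) * (1 + a * y ^ 2))) by (field; lra).
  rewrite !Rabs_mult. rewrite (Rabs_pos_eq r) by lra.
  rewrite (Rabs_pos_eq (/ _)). 2: { left; apply Rinv_0_lt_compat; nra. }
  assert (/ ((1 + a * x ^ 2) * (1 + a * y ^ 2)) <= 1).
  { rewrite <- Rinv_1. apply Rinv_le_contravar; nra. }
  pose proof (Rabs_pos (x^2 - y^2)). rewrite <- (Rmult_1_r (r * Rabs (x ^ 2 - y ^ 2))) at 2. apply Rmult_le_compat_l; [apply Rmult_le_pos; lra | auto].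
Qed.

Lemma lip_cont (f : R -> R) C1 C2 : 0 <= C1 -> 0 <= C2 ->
  (forall t s, Rabs (f t - f s) <= Rabs (t - s) * (C1 * (Rabs t + Rabs s) + C2)) -> continuity f.
Proof.
  intros H1 H2 Hl t0. unfold continuity_pt, continue_in, limit1_in, limit_in.
  intros eps Heps. set (M := C1 * (2 * Rabs t0 + 1) + C2 + 1).
  assert (HM : 0 < M) by (unfold M; pose proof (Rabs_pos t0); nra).
  exists (Rmin 1 (eps / M)). split.
  { apply Rmin_pos; [lra | apply Rdiv_lt_0_compat; lra]. }
  intros x [_ Hx]. simpl in *. unfold R_dist in *.
  assert (Hx1 : Rabs (x - t0) < 1) by (eapply Rlt_le_trans; [apply Hx | apply Rmin_l]).
  assert (Hx2 : Rabs (x - t0) < eps / M) by (eapply Rlt_le_trans; [apply Hx | apply Rmin_r]).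
  assert (Hxa : Rabs x <= Rabs t0 + 1).
  { replace x with ((x - t0) + t0) by ring. eapply Rle_trans; [apply Rabs_triang|]. lra. }
  specialize (Hl x t0).
  assert (C1 * (Rabs x + Rabs t0) + C2 <= M) by (unfold M; nra).
  pose proof (Rabs_pos (x - t0)).
  assert (Rabs (x - t0) * M < eps).
  { replace eps with (eps / M * M) by (field; lra). apply Rmult_lt_compat_r; lra. }
  assert (0 <= C1 * (Rabs x + Rabs t0) + C2) by (pose proof (Rabs_pos x); pose proof (Rabs_pos t0); nra).
  nra.
Qed.

Lemma exRc (f : R -> R) a b : (forall z, Rmin a b <= z <= Rmax a b -> continuous f z) -> ex_RInt f a b.
Proof. intros; apply (ex_RInt_continuous (V:=R_CompleteNormedModule)); auto. Qed.

Lemma hbound (a r Rad x : R) : 0 < a -> 0 <= r <= Rad -> 0 <= r * x ^ 2 / (1 + a * x ^ 2) <= Rad / a.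
Proof.
  intros Ha Hr. pose proof (pow2_ge_0 x).
  assert (HD : 0 < 1 + a * x ^ 2) by nra.
  replace (r * x ^ 2 / (1 + a * x ^ 2)) with (r / a - r / (a * (1 + a * x ^ 2))) by (field; lra).
  assert (0 <= r / (a * (1 + a * x ^ 2))) by (apply Rdiv_le_0_compat; nra).
  assert (r / a <= Rad / a) by (apply Rmult_le_compat_r; [left; apply Rinv_0_lt_compat; lra | lra]).
  split; [| lra].
  replace (r / a - r / (a * (1 + a * x ^ 2))) with (r * x ^ 2 / (1 + a * x ^ 2)) by (field; lra).
  apply Rdiv_le_0_compat; nra.
Qed.

Definition G1 (Rad : R) (q : nat) (r : R) : R :=
  - (Rad * (Rad - r) ^ (S q) / (INR q + 1) - (Rad - r) ^ (S (S q)) / (INR q + 2)).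
Definition G3 (Rad : R) (q : nat) (r : R) : R :=
  - (Rad ^ 3 * (Rad - r) ^ (S q) / (INR q + 1) - 3 * Rad ^ 2 * (Rad - r) ^ (S (S q)) / (INR q + 2)
     + 3 * Rad * (Rad - r) ^ (S (S (S q))) / (INR q + 3) - (Rad - r) ^ (S (S (S (S q)))) / (INR q + 4)).

Lemma G_deriv (Rad n2 c : R) (q : nat) r :
  is_derive (fun r => n2 * G1 Rad q r - 2 * c * G3 Rad q r) r ((n2 * r - 2 * c * r ^ 3) * (Rad - r) ^ q).
Proof.
  unfold G1, G3. pose proof (pos_INR q).
  auto_derive. repeat split; lra.
  repeat match goal with |- context [match q with 0%nat => ?a | S _ => ?b end] =>
    replace (match q with 0%nat => a | S _ => b end) with (INR q + 1) by (destruct q; simpl; ring) end.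
  match goal with |- @eq _ ?x ?y => change (@eq R x y) end. unfold Rminus. set (Y := (Rad + - r) ^ q). field. lra.
Qed.

Definition Qf (n : Z) (alpha kappa Rad : R) (phi phi1 phid : R -> R) : R :=
  RInt (fun r => r * phid r ^ 2 + IZR n ^ 2 * r * phi1 r ^ 2 - 2 * (/ alpha - kappa) * r * phi r ^ 2) 0 Rad.

Lemma main_gen (n : Z) (alpha kappa Rad Phi Psi : R) (phi phi1 phid psi psi1 psid : R -> R) :
  0 < alpha -> 0 < Rad ->
  (forall r, phi r = r * phi1 r) -> (forall r, psi r = r * psi1 r) ->
  (forall r, is_derive phi r (phid r)) -> (forall r, is_derive psi r (psid r)) ->
  (forall r, continuous phid r) -> (forall r, continuous psid r) ->
  (forall r, continuous phi1 r) -> (forall r, continuous psi1 r) ->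
  phi Rad = 0 -> psi Rad = 0 ->
  (forall r, 0 < r < Rad -> 0 < phi r) ->
  (forall r, 0 <= r <= Rad -> 0 <= phi r <= Phi) ->
  (forall r, 0 <= r <= Rad -> 0 <= psi r <= Psi) ->
  Qf n alpha kappa Rad phi phi1 phid < 0 ->
  0 < Qf n alpha kappa Rad psi psi1 psid ->
  Nehari_nonempty n alpha kappa Rad.
Proof.
  intros Ha HR Ephi Epsi Dphi Dpsi Cphid Cpsid Cphi1 Cpsi1 phiR psiR phipos phib psib QA QD.
  assert (Cphi : forall r, continuous phi r)
    by (intro r; apply (ex_derive_continuous (K:=R_AbsRing) (V:=R_NormedModule)); eexists; apply Dphi).
  assert (Cpsi : forall r, continuous psi r)
    by (intro r; apply (ex_derive_continuous (K:=R_AbsRing) (V:=R_NormedModule)); eexists; apply Dpsi).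
  set (u := fun t r => t * phi r + psi r).
  assert (Du : forall t r, is_derive (u t) r (t * phid r + psid r)).
  { intros. unfold u. apply (is_derive_plus (fun r => t * phi r) psi).
    apply is_derive_scal; auto. auto. }
  set (A := fun r => r * phid r ^ 2 + IZR n ^ 2 * r * phi1 r ^ 2 - 2 * (/ alpha - kappa) * r * phi r ^ 2).
  set (B := fun r => r * phid r * psid r + IZR n ^ 2 * r * (phi1 r * psi1 r)
                     - 2 * (/ alpha - kappa) * r * (phi r * psi r)).
  set (D := fun r => r * psid r ^ 2 + IZR n ^ 2 * r * psi1 r ^ 2 - 2 * (/ alpha - kappa) * r * psi r ^ 2).
  set (h := fun t r => r * (u t r) ^ 2 / (1 + alpha * (u t r) ^ 2)).
  set (N := fun t => RInt (h t) 0 Rad).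
  assert (Cu : forall t r, continuous (u t) r) by (intros; unfold u; cont).
  assert (Ch : forall t r, continuous (h t) r).
  { intros. unfold h. apply cR_div. cont. cont. apply den_ne; auto. }
  assert (exA : ex_RInt A 0 Rad) by (apply exRc; intros; unfold A; cont).
  assert (exB : ex_RInt B 0 Rad) by (apply exRc; intros; unfold B; cont).
  assert (exD : ex_RInt D 0 Rad) by (apply exRc; intros; unfold D; cont).
  assert (exh : forall t, ex_RInt (h t) 0 Rad) by (intros; apply exRc; intros; auto).
  assert (Gform : forall t, gammak n alpha kappa Rad (u t) =
     / 2 * (t ^ 2 * RInt A 0 Rad + (2 * t) * RInt B 0 Rad + 1 * RInt D 0 Rad + (2 * / alpha) * N t)).
  { intro t. unfold gammak, N. f_equal.
    rewrite <- RInt_lin4; auto.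
    apply RInt_ext. intros r Hr. rewrite Rmin_left, Rmax_right in Hr by lra.
    rewrite (is_derive_unique _ _ _ (Du t r)). unfold A, B, D, h, u. rewrite !Ephi, !Epsi.
    match goal with |- @eq _ ?x ?y => change (@eq R x y) end; field; split; [apply den_ne; auto | lra]. }
  assert (Nlip : forall t s, Rabs (N t - N s) <=
     Rabs (t - s) * ((Rad * Rad * Phi * Phi) * (Rabs t + Rabs s) + 2 * Rad * Rad * Phi * Psi)).
  { intros t s. unfold N.
    replace (Rabs (t - s) * ((Rad * Rad * Phi * Phi) * (Rabs t + Rabs s) + 2 * Rad * Rad * Phi * Psi))
      with ((Rad - 0) * (Rad * (Rabs (t - s) * Phi * ((Rabs t + Rabs s) * Phi + 2 * Psi)))) by ring.
    apply RInt_diff_bound; auto. lra.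
    intros r Hr. unfold h.
    eapply Rle_trans. apply h_lip; auto; lra.
    destruct (phib r Hr) as [p0 p1]. destruct (psib r Hr) as [q0 q1].
    replace (u t r ^ 2 - u s r ^ 2) with (((t - s) * phi r) * ((t + s) * phi r + 2 * psi r)) by (unfold u; ring).
    rewrite !Rabs_mult. rewrite (Rabs_pos_eq (phi r)) by lra.
    assert (Rabs ((t + s) * phi r + 2 * psi r) <= (Rabs t + Rabs s) * Phi + 2 * Psi).
    { eapply Rle_trans. apply Rabs_triang. rewrite !Rabs_mult.
      rewrite (Rabs_pos_eq (phi r)) by lra. rewrite (Rabs_pos_eq 2) by lra. rewrite (Rabs_pos_eq (psi r)) by lra.
      pose proof (Rabs_triang t s). pose proof (Rabs_pos (t + s)). nra. }
    pose proof (Rabs_pos (t - s)). pose proof (Rabs_pos ((t + s) * phi r + 2 * psi r)).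
    assert (0 <= Rabs (t - s) * phi r) by nra.
    assert (Rabs (t - s) * phi r <= Rabs (t - s) * Phi) by nra.
    assert (Rabs (t - s) * phi r * Rabs ((t + s) * phi r + 2 * psi r) <=
            Rabs (t - s) * Phi * ((Rabs t + Rabs s) * Phi + 2 * Psi)).
    { apply Rmult_le_compat; nra. }
    apply Rmult_le_compat; [lra | nra | lra | auto]. }
  assert (Phi0 : 0 <= Phi) by (destruct (phib 0) as [? ?]; lra).
  assert (Psi0 : 0 <= Psi) by (destruct (psib 0) as [? ?]; lra).
  assert (Ncont : continuity N).
  { apply (lip_cont N (Rad * Rad * Phi * Phi) (2 * Rad * Rad * Phi * Psi)); auto.
    repeat apply Rmult_le_pos; lra. repeat apply Rmult_le_pos; lra. }
  assert (Ncont' : forall y, continuous N y) by (intro y; apply continuity_pt_filterlim; apply Ncont).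
  change (RInt A 0 Rad < 0) in QA. change (0 < RInt D 0 Rad) in QD.
  set (QA' := RInt A 0 Rad) in *. set (QB := RInt B 0 Rad) in *. set (QD' := RInt D 0 Rad) in *.
  set (g := fun t => - (t ^ 2 * QA' + (2 * t) * QB + 1 * QD' + (2 * / alpha) * N t)).
  assert (gcont : continuity g).
  { assert (Hg : forall t, continuous g t) by (intro t; unfold g; cont).
    intro t. apply continuity_pt_filterlim. apply Hg. }
  assert (N0 : 0 <= N 0).
  { unfold N. apply RInt_ge_0; [lra | auto | ]. intros r Hr. unfold h. apply hbound with (Rad := Rad); auto; lra. }
  assert (Nb : forall t, N t <= Rad * (Rad / alpha)).
  { intro t. eapply Rle_trans; [apply Rle_abs|]. unfold N.
    replace (Rad * (Rad / alpha)) with ((Rad - 0) * (Rad / alpha)) by ring.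
    apply abs_RInt_le_const; auto; [lra|]. intros r Hr. unfold h.
    destruct (hbound alpha r Rad (u t r)) as [? ?]; auto. rewrite Rabs_pos_eq; auto. }
  assert (g0 : g 0 < 0) by (unfold g; assert (0 <= 2 * / alpha * N 0) by (apply Rmult_le_pos; [left; apply Rmult_lt_0_compat; [lra | apply Rinv_0_lt_compat; lra] | auto]); lra).
  set (M0 := 2 * / alpha * (Rad * (Rad / alpha))).
  set (C := 2 * Rabs QB + Rabs QD' + M0 + 1).
  assert (HM0 : 0 <= M0).
  { unfold M0. apply Rmult_le_pos. left; apply Rmult_lt_0_compat; [lra | apply Rinv_0_lt_compat; lra].
    apply Rmult_le_pos; [lra | left; apply Rdiv_lt_0_compat; lra]. }
  assert (HC : 1 <= C) by (unfold C; pose proof (Rabs_pos QB); pose proof (Rabs_pos QD'); lra).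
  set (T := C / (- QA') + 1).
  assert (HT1 : 1 <= T) by (unfold T; assert (0 <= C / - QA') by (apply Rdiv_le_0_compat; lra); lra).
  assert (HaT : - QA' * T = C - QA') by (unfold T; field; lra).
  assert (gT : 0 < g T).
  { unfold g.
    assert (2 * T * QB <= 2 * T * Rabs QB) by (pose proof (Rle_abs QB); nra).
    assert (QD' <= Rabs QD') by apply Rle_abs.
    assert (2 * / alpha * N T <= M0).
    { unfold M0. apply Rmult_le_compat_l; auto. left; apply Rmult_lt_0_compat; [lra | apply Rinv_0_lt_compat; lra]. }
    assert (T ^ 2 * QA' = - (T * (C - QA'))) by (rewrite <- HaT; ring).
    assert (T * C >= 2 * T * Rabs QB + Rabs QD' + M0 + 1).
    { unfold C. pose proof (Rabs_pos QB); pose proof (Rabs_pos QD'). nra. }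
    nra. }
  destruct (IVT g 0 T gcont ltac:(lra) g0 gT) as [z [[Hz0 HzT] Hgz]].
  assert (zpos : 0 < z).
  { destruct Hz0 as [Hz0 | Hz0]; auto. subst z. lra. }
  assert (Hgam : gammak n alpha kappa Rad (u z) = 0).
  { rewrite Gform. unfold g in Hgz. lra. }
  assert (Hnorm : 0 < normH2 Rad (u z)).
  { unfold normH2.
    rewrite (RInt_ext _ (fun r => r * (z * phid r + psid r) ^ 2 + r * (z * phi1 r + psi1 r) ^ 2)).
    2: { intros r Hr. rewrite Rmin_left, Rmax_right in Hr by lra.
         rewrite (is_derive_unique _ _ _ (Du z r)). unfold u. rewrite !Ephi, !Epsi.
         match goal with |- @eq _ ?x ?y => change (@eq R x y) end; field; lra. }
    apply RInt_gt_0; [lra | | intros; cont].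
    intros r Hr.
    assert (Hu : 0 < u z r).
    { unfold u. pose proof (phipos r Hr). destruct (psib r ltac:(lra)). nra. }
    assert (HY : r * (z * phi1 r + psi1 r) = u z r) by (unfold u; rewrite Ephi, Epsi; ring).
    assert (0 < z * phi1 r + psi1 r) by nra.
    pose proof (pow2_ge_0 (z * phid r + psid r)). nra. }
  exists (fun _ => u z). split; [split | split].
  - intros _. unfold C1_0. split; [intro; eexists; apply Du|]. split.
    + intro x. apply (continuous_ext (fun r => z * phid r + psid r)).
      intro; symmetry; apply is_derive_unique, Du. cont.
    + unfold u. rewrite phiR, psiR, Ephi, Epsi. split; ring.
  - intros eps Heps. exists 0%nat. intros k l _ _. unfold normH2.
    rewrite (RInt_ext _ (fun _ => 0)).
    + rewrite RInt_const. unfold scal; simpl; unfold mult; simpl. rewrite Rmult_0_r. lra.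
    + intros x _. rewrite (Derive_ext _ (fun _ => 0)) by (intro; ring). rewrite Derive_const.
      match goal with |- @eq _ ?x ?y => change (@eq R x y) end.
      replace (u z x - u z x) with 0 by ring. ring.
  - intro H. apply is_lim_seq_unique in H. rewrite Lim_seq_const in H. injection H as H. lra.
  - apply (is_lim_seq_ext (fun _ => 0)). intro; symmetry; auto. apply is_lim_seq_const.
Qed.

Definition psid (Rad : R) (k : nat) (r : R) : R := (Rad - r) ^ k - r * (INR k * (Rad - r) ^ (pred k)).

Lemma psi_deriv Rad k r : is_derive (fun r => r * (Rad - r) ^ k) r (psid Rad k r).
Proof. unfold psid. auto_derive; auto. match goal with |- @eq _ ?x ?y => change (@eq R x y) end. unfold Rminus. ring. Qed.

Lemma psi_Q (n : Z) alpha kappa Rad k : 0 < Rad -> 1 <= IZR n ^ 2 ->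
  12 * (/ alpha - kappa) * Rad ^ 2 < (2 * INR k + 3) * (2 * INR k + 4) ->
  0 < Qf n alpha kappa Rad (fun r => r * (Rad - r) ^ k) (fun r => (Rad - r) ^ k) (psid Rad k).
Proof.
  intros HR Hn Hk. unfold Qf.
  set (c := / alpha - kappa) in *. set (n2 := IZR n ^ 2) in *.
  set (q := (k * 2)%nat).
  assert (Hq : INR q = 2 * INR k) by (unfold q; rewrite mult_INR; simpl; ring).
  apply Rlt_le_trans with (RInt (fun r => (n2 * r - 2 * c * r ^ 3) * (Rad - r) ^ q) 0 Rad).
  - rewrite (is_RInt_unique _ _ _ _ (is_RInt_derive (V:=R_CompleteNormedModule)
      (fun r => n2 * G1 Rad q r - 2 * c * G3 Rad q r) _ 0 Rad (fun r _ => G_deriv Rad n2 c q r)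
      (fun r _ => ltac:(cont)))).
    unfold minus, plus, opp; simpl.
    unfold G1, G3. replace (Rad - Rad) with 0 by ring. replace (Rad - 0) with Rad by ring. simpl.
    pose proof (pos_INR k). pose proof (pos_INR q).
    assert (HY : 0 < Rad ^ q) by (apply pow_lt; lra).
    set (Y := Rad ^ q) in *. set (x := INR q) in *.
    match goal with |- 0 < ?e => replace e with
     (Y * Rad ^ 2 * (n2 * ((x + 3) * (x + 4)) - 12 * c * Rad ^ 2) / ((x + 1) * (x + 2) * (x + 3) * (x + 4)))
    by (field; lra) end.
    apply Rdiv_lt_0_compat; [| repeat apply Rmult_lt_0_compat; lra].
    apply Rmult_lt_0_compat; [apply Rmult_lt_0_compat; nra|].
    assert ((x + 3) * (x + 4) <= n2 * ((x + 3) * (x + 4))) by nra. nra.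
  - apply RInt_le; [lra | apply exRc; intros; cont | apply exRc; intros; unfold psid; cont |].
    intros r Hr. unfold q. rewrite pow_mult.
    set (Z := (Rad - r) ^ k). pose proof (pow2_ge_0 (psid Rad k r)). nra.
Qed.

Lemma exp_n (x : R) (m : nat) : exp (INR m * x) = exp x ^ m.
Proof.
  induction m. simpl. rewrite Rmult_0_l. apply exp_0.
  rewrite S_INR. replace ((INR m + 1) * x) with (INR m * x + x) by ring.
  rewrite exp_plus, IHm. simpl. ring.
Qed.

Lemma pow2_step (a b : R) (m : nat) : 0 <= a -> a ^ m <= b -> a ^ (m * 2) <= b ^ 2.
Proof. intros Ha H. rewrite pow_mult. apply pow_incr. split; auto. apply pow_le; auto. Qed.

Lemma ln2_ge : 2 / 3 <= ln 2.
Proof.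
  assert (He : exp (1/24) <= 24/23).
  { pose proof (exp_ineq1_le (- (1/24))).
    assert (exp (1/24) * exp (- (1/24)) = 1) by (rewrite <- exp_plus; replace (1/24 + - (1/24)) with 0 by ring; apply exp_0).
    pose proof (exp_pos (1/24)). nra. }
  assert (H16 : exp (1/24) ^ 16 < 2).
  { pose proof (exp_pos (1/24)).
    assert (H1 : exp (1/24) ^ 2 <= 1089/1000).
    { apply Rle_trans with ((24/23)^2). apply pow_incr; lra. simpl; lra. }
    assert (H2 : exp (1/24) ^ (2*2) <= 1186/1000).
    { apply Rle_trans with ((1089/1000)^2). apply pow2_step; lra. simpl; lra. }
    assert (H3 : exp (1/24) ^ (2*2*2) <= 1407/1000).
    { apply Rle_trans with ((1186/1000)^2). apply pow2_step; lra. simpl; lra. }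
    assert (H4 : exp (1/24) ^ (2*2*2*2) <= 19797/10000).
    { apply Rle_trans with ((1407/1000)^2). apply pow2_step; lra. simpl; lra. }
    simpl in H4. simpl. lra. }
  rewrite <- exp_n in H16. replace (INR 16 * (1/24)) with (2/3) in H16 by (simpl; field).
  rewrite <- (ln_exp (2/3)). left. apply ln_increasing; auto. apply exp_pos.
Qed.

Lemma phiA_Q (n : Z) alpha kappa Rad : 0 < Rad ->
  Qf n alpha kappa Rad (fun r => r * (Rad - r)) (fun r => Rad - r) (fun r => Rad - 2 * r) =
  Rad ^ 4 / 6 + IZR n ^ 2 * Rad ^ 4 / 12 - 2 * (/ alpha - kappa) * Rad ^ 6 / 60.
Proof.
  intros HR. unfold Qf. set (c := / alpha - kappa). set (n2 := IZR n ^ 2).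
  rewrite (is_RInt_unique _ _ _ _ (is_RInt_derive (V:=R_CompleteNormedModule)
    (fun r => Rad^2 * r^2 / 2 - 4 * Rad * r^3 / 3 + r^4 + n2 * (Rad^2 * r^2 / 2 - 2 * Rad * r^3 / 3 + r^4 / 4)
       - 2 * c * (Rad^2 * r^4 / 4 - 2 * Rad * r^5 / 5 + r^6 / 6))
    (fun r => r * (Rad - 2 * r) ^ 2 + n2 * r * (Rad - r) ^ 2 - 2 * c * r * (r * (Rad - r)) ^ 2) 0 Rad
    (fun r _ => ltac:(auto_derive; [auto | match goal with |- @eq _ ?x ?y => change (@eq R x y) end; field]))
    (fun r _ => ltac:(cont)))).
  unfold minus, plus, opp; simpl. field.
Qed.

Lemma phiB_Q (n : Z) alpha kappa Rad : 0 < Rad ->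
  Qf n alpha kappa Rad (fun r => r * (r * (Rad - r))) (fun r => r * (Rad - r)) (fun r => 2 * Rad * r - 3 * r ^ 2) =
  Rad ^ 6 / 10 + IZR n ^ 2 * Rad ^ 6 / 60 - 2 * (/ alpha - kappa) * Rad ^ 8 / 168.
Proof.
  intros HR. unfold Qf. set (c := / alpha - kappa). set (n2 := IZR n ^ 2).
  rewrite (is_RInt_unique _ _ _ _ (is_RInt_derive (V:=R_CompleteNormedModule)
    (fun r => Rad^2 * r^4 - 12 * Rad * r^5 / 5 + 3 * r^6 / 2 + n2 * (Rad^2 * r^4 / 4 - 2 * Rad * r^5 / 5 + r^6 / 6)
       - 2 * c * (Rad^2 * r^6 / 6 - 2 * Rad * r^7 / 7 + r^8 / 8))
    (fun r => r * (2 * Rad * r - 3 * r ^ 2) ^ 2 + n2 * r * (r * (Rad - r)) ^ 2 - 2 * c * r * (r * (r * (Rad - r))) ^ 2) 0 Rad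
    (fun r _ => ltac:(auto_derive; [auto | match goal with |- @eq _ ?x ?y => change (@eq R x y) end; field]))
    (fun r _ => ltac:(cont)))).
  unfold minus, plus, opp; simpl. field.
Qed.

Lemma psi_facts Rad k : 0 < Rad ->
  (forall r, continuous (psid Rad (S k)) r) /\ (forall r, continuous (fun r => (Rad - r) ^ S k) r) /\
  (fun r => r * (Rad - r) ^ S k) Rad = 0 /\
  (forall r, 0 <= r <= Rad -> 0 <= (fun r => r * (Rad - r) ^ S k) r <= Rad * Rad ^ S k).
Proof.
  intros HR. split; [intro r; unfold psid; cont|]. split; [intro r; cont|]. split.
  - simpl. replace (Rad - Rad) with 0 by ring. ring.
  - intros r Hr. simpl (_ r). split.
    + apply Rmult_le_pos; [lra | apply pow_le; lra].
    + apply Rmult_le_compat; [lra | apply pow_le; lra | lra | apply pow_incr; lra].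
Qed.

Theorem lemma4p2 (r0 : R) (n : Z) (alpha Rad kappa : R) :
  first_pos_zero_J0 r0 ->
  (1 <= Z.abs n)%Z ->
  0 < alpha ->
  0 < Rad ->
  kappa < / alpha - (r0 ^ 2 + (IZR n) ^ 2) / (2 * Rad ^ 2) ->
  sqrt (6 * (1 + (IZR n) ^ 2 * (2 * ln 2 - 1)) / (/ alpha - kappa)) < Rad ->
  Nehari_nonempty n alpha kappa Rad.
Proof.
  intros _ Hn Ha HR Hk Hs.
  pose proof ln2_ge as Hl.
  assert (Hn2 : IZR n ^ 2 = 1 \/ 4 <= IZR n ^ 2).
  { rewrite <- pow2_abs, <- abs_IZR. destruct (Z.eq_dec (Z.abs n) 1) as [E | E].
    - left. rewrite E. simpl. ring.
    - right. assert (2 <= IZR (Z.abs n)) by (apply IZR_le; lia). nra. }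
  assert (Hn1 : 1 <= IZR n ^ 2) by lra.
  set (n2 := IZR n ^ 2) in *.
  set (c := / alpha - kappa) in *.
  assert (HR2 : 0 < Rad ^ 2) by (apply pow_lt; lra).
  assert (Hc : 0 < c).
  { assert (0 <= (r0 ^ 2 + n2) / (2 * Rad ^ 2)).
    { apply Rdiv_le_0_compat; [pose proof (pow2_ge_0 r0); lra | lra]. }
    unfold c. lra. }
  set (K := 1 + n2 * (2 * ln 2 - 1)) in *.
  assert (HK : 0 < K) by (unfold K; nra).
  assert (HcR : 6 * K < c * Rad ^ 2).
  { assert (Hx : 0 <= 6 * K / c) by (apply Rdiv_le_0_compat; lra).
    pose proof (sqrt_sqrt _ Hx). pose proof (sqrt_pos (6 * K / c)).
    assert (6 * K / c < Rad ^ 2) by nra.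
    replace (6 * K) with (6 * K / c * c) by (field; lra). nra. }
  destruct (INR_archimed 1 (12 * c * Rad ^ 2)) as [k Hk']; [lra|].
  assert (HkS : 12 * c * Rad ^ 2 < (2 * INR (S k) + 3) * (2 * INR (S k) + 4)).
  { rewrite S_INR. pose proof (pos_INR k). nra. }
  pose proof (psi_Q n alpha kappa Rad (S k) HR Hn1 HkS) as HQD.
  destruct (psi_facts Rad k HR) as [P1 [P2 [P3 P4]]].
  destruct Hn2 as [E | E].
  -
    apply (main_gen n alpha kappa Rad (Rad ^ 2) (Rad * Rad ^ S k)
             (fun r => r * (Rad - r)) (fun r => Rad - r) (fun r => Rad - 2 * r)
             (fun r => r * (Rad - r) ^ S k) (fun r => (Rad - r) ^ S k) (psid Rad (S k))); auto.
    + intro r. auto_derive; auto. match goal with |- @eq _ ?x ?y => change (@eq R x y) end. ring.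
    + intro r. apply psi_deriv.
    + intro r. cont.
    + intro r. cont.
    + simpl. ring.
    + intros r Hr. simpl. nra.
    + intros r Hr. simpl. nra.
    + rewrite phiA_Q by auto. fold n2 c. rewrite E.
      assert (HR4 : 0 < Rad ^ 4) by (apply pow_lt; lra).
      replace (Rad ^ 6) with (Rad ^ 4 * Rad ^ 2) by ring.
      unfold K in HcR. rewrite E in HcR. nra.
  - apply (main_gen n alpha kappa Rad (Rad ^ 3) (Rad * Rad ^ S k)
             (fun r => r * (r * (Rad - r))) (fun r => r * (Rad - r)) (fun r => 2 * Rad * r - 3 * r ^ 2)
             (fun r => r * (Rad - r) ^ S k) (fun r => (Rad - r) ^ S k) (psid Rad (S k))); auto.
    + intro r. auto_derive; auto. match goal with |- @eq _ ?x ?y => change (@eq R x y) end. ring.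
    + intro r. apply psi_deriv.
    + intro r. cont.
    + intro r. cont.
    + simpl. ring.
    + intros r Hr. simpl. apply Rmult_lt_0_compat; [lra|]. apply Rmult_lt_0_compat; lra.
    + intros r Hr. simpl. split. apply Rmult_le_pos; [lra|]. apply Rmult_le_pos; lra.
      assert (r * (Rad - r) <= Rad * Rad) by nra.
      assert (0 <= r * (Rad - r)) by nra. nra.
    + rewrite phiB_Q by auto. fold n2 c.
      assert (HR6 : 0 < Rad ^ 6) by (apply pow_lt; lra).
      replace (Rad ^ 8) with (Rad ^ 6 * Rad ^ 2) by ring.
      unfold K in HcR.
      assert (n2 * (2 * ln 2 - 1) >= n2 / 3) by nra.
      assert (Hc2 : c * Rad ^ 2 > 84 / 10 + 84 * n2 / 60) by nra.
      replace (Rad ^ 6 / 10 + n2 * Rad ^ 6 / 60 - 2 * c * (Rad ^ 6 * Rad ^ 2) / 168)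
        with (Rad ^ 6 * ((84 / 10 + 84 * n2 / 60 - c * Rad ^ 2) / 84)) by field.
      apply Rmult_pos_neg; [lra|]. lra.
Qed.
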